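(* Let $v\in\mathrm{Box}(\Sigma)$, $\gamma^v$ as in the context, and $l\in\mathbb L$. Then the expression $x^v\prod_{j=1}^n\frac{z_j^{l_j+\gamma^v_j+D_j}}{\Gamma(l_j+\gamma^v_j+D_j+1)}$ vanishes in the completion of $\mathbb C[K,\Sigma]$ unless $l\in\mathcal S_\Sigma(\gamma^v)$.
   Context: $N\cong\mathbb Z^d$ lattice, $\mathcal A=\{v_1,\dots,v_n\}\subset N$ generating $N$ with a homomorphism $\mathrm h:N\to\mathbb Z$, $\mathrm h(v_j)=1$; $\mathbb L=\{l\in\mathbb Z^n:\sum l_jv_j=0\}$; $K=\mathbb R_{\ge0}\mathrm{Conv}(\mathcal A)$; $\Sigma$ the simplicial fan supported on $K$ from a regular triangulation of $\mathrm{Conv}(\mathcal A)$ with vertices in $\mathcal A$. $\mathbb C[K,\Sigma]$: basis $x^w$, $w\in K\cap N$, $x^{w_1}x^{w_2}=x^{w_1+w_2}$ if a cone of $\Sigma$ contains both, else $0$; graded by $\mathrm h$, completed w.r.t. this grading. $\mathrm{Box}(\Sigma)$: $v\in N$ with $v=\sum q^v_jv_j$, $0\le q^v_j<1$, $q^v_j=0$ unless $v_j$ spans a ray of one fixed maximal cone. Fix $\beta\in N$ and $\gamma^v\in\mathbb Q^n$ with $\sum\gamma^v_jv_j=\beta$, $\gamma^v_j-q^v_j\in\mathbb Z$. $D_j=x^{v_j}$ if $\mathbb R_{\ge0}v_j\in\Sigma$, else $D_j=0$; the factors $z_j^{a+D_j}/\Gamma(a+D_j+1)$ are understood as power series in $D_j$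 (Taylor expansion of $s\mapsto z_j^s/\Gamma(s+1)$ at $s=a$), $z_j\in\mathbb C^*$ with a chosen argument. For $\gamma\in\mathbb Q^n$ and $l\in\mathbb L$, $\mathrm{Supp}(l)=\{v_j:l_j+\gamma_j\notin\mathbb Z_{\ge0}\}$, and $\mathcal S_\Sigma(\gamma)$ is the set of $l\in\mathbb L$ such that all elements of $\mathrm{Supp}(l)$ generate rays of a single maximal cone of $\Sigma$. *)

(* Defs.v *)
From HB Require Import structures.
From mathcomp Require Import all_boot all_order all_algebra.
From mathcomp Require Import all_classical all_reals all_analysis.
From mathcomp Require Import complex.

Set Implicit Arguments.
Unset Strict Implicit.
Unset Printing Implicit Defensive.
Import Order.TTheory GRing.Theory Num.Theory.
Local Open Scope classical_set_scope.
Local Open Scope ring_scope.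

(** Lattice N = 'rV[int]_d.  [toR w] is the image of w in N (x) R = R^d. *)
Definition toR (R : realType) (d : nat) (w : 'rV[int]_d) : 'rV[R]_d :=
  map_mx (fun z : int => z%:~R) w.

Definition pairing (R : realType) (d : nat) (u x : 'rV[R]_d) : R :=
  \sum_(i < d) u 0 i * x 0 i.

Definition in_cone (R : realType) (d n : nat) (v : 'I_n -> 'rV[int]_d)
    (S : {set 'I_n}) (w : 'rV[int]_d) : Prop :=
  exists lam : 'I_n -> R,
    (forall j, 0 <= lam j) /\ (forall j, j \notin S -> lam j = 0) /\
    toR R w = \sum_(j < n) lam j *: toR R (v j).

Definition inKN (R : realType) (d n : nat) (v : 'I_n -> 'rV[int]_d)
    (w : 'rV[int]_d) : Prop := in_cone R v [set: 'I_n] w.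

(** [is_cell v om S] : S is (the index set of) a cell of the regular
    subdivision of Conv(A) induced by the heights om : 'I_n -> R, i.e. the
    set of points of A lying on a lower face of the lifted configuration.
    (Since h(v_j) = 1 for all j, affine functionals on the hyperplane h = 1
    are restrictions of linear functionals u.) *)
Definition is_cell (R : realType) (d n : nat) (v : 'I_n -> 'rV[int]_d)
    (om : 'I_n -> R) (S : {set 'I_n}) : Prop :=
  exists u : 'rV[R]_d,
    forall j, pairing u (toR R (v j)) <= om j /\
              (pairing u (toR R (v j)) = om j <-> j \in S).

(** the regular subdivision induced by om is a triangulation: all its cells
    are simplices (linearly independent, equivalently affinely independent
    since h(v_j)=1). *)
Definition is_regular_triangulation (R : realType) (d n : nat)
    (v : 'I_n -> 'rV[int]_d) (om : 'I_n -> R) : Prop :=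
  forall S, is_cell v om S ->
    forall lam : 'I_n -> R, (forall j, j \notin S -> lam j = 0) ->
      \sum_(j < n) lam j *: toR R (v j) = 0 -> forall j, lam j = 0.

Definition is_max_cell (R : realType) (d n : nat) (v : 'I_n -> 'rV[int]_d)
    (om : 'I_n -> R) (S : {set 'I_n}) : Prop :=
  is_cell v om S /\ forall T, is_cell v om T -> S \subset T -> T = S.

Definition is_ray (R : realType) (d n : nat) (v : 'I_n -> 'rV[int]_d)
    (om : 'I_n -> R) (j : 'I_n) : Prop := is_cell v om [set j].

Definition common_cone (R : realType) (d n : nat) (v : 'I_n -> 'rV[int]_d)
    (om : 'I_n -> R) (w1 w2 : 'rV[int]_d) : Prop :=
  exists S, is_cell v om S /\ in_cone R v S w1 /\ in_cone R v S w2.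

(** * The completion of C[K, Sigma]
    An element of the completion (w.r.t. the h-grading) is a formal series
    sum_{w in K cap N} c_w x^w, represented by its coefficient function
    N -> C (coefficients outside K cap N are irrelevant/zero). *)
Definition cser (R : realType) (d : nat) := 'rV[int]_d -> R[i].

Definition mono (R : realType) (d : nat) (w : 'rV[int]_d) : cser R d :=
  fun u => if u == w then 1 else 0.

Definition cone1 (R : realType) (d : nat) : cser R d := @mono R d 0.

(** product in the completion of C[K,Sigma]: bilinear extension of
    x^w1 x^w2 = x^(w1+w2) if a cone of Sigma contains both, 0 otherwise.
    (For each w the index set is finite, as h > 0 on K \ 0.) *)
Definition cmul (R : realType) (d n : nat) (v : 'I_n -> 'rV[int]_d)
    (om : 'I_n -> R) (f g : cser R d) : cser R d :=
  fun w => \sum_(p \in [set p : 'rV[int]_d * 'rV[int]_d |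
                    p.1 + p.2 = w /\ inKN R v p.1 /\ inKN R v p.2 /\
                    common_cone v om p.1 p.2]) (f p.1 * g p.2).

Definition cpow (R : realType) (d n : nat) (v : 'I_n -> 'rV[int]_d)
    (om : 'I_n -> R) (f : cser R d) (k : nat) : cser R d :=
  iter k (cmul v om f) (@cone1 R d).

(** the power series sum_k c_k f^k in the completion (f of positive degree,
    so for each w only finitely many terms contribute to the coefficient of
    x^w; this coefficient is the finite-support sum). *)
Definition pseries (R : realType) (d n : nat) (v : 'I_n -> 'rV[int]_d)
    (om : 'I_n -> R) (c : nat -> R[i]) (f : cser R d) : cser R d :=
  fun w => \sum_(k \in [set: nat]) (c k * cpow v om f k w).

Definition Dj (R : realType) (d n : nat) (v : 'I_n -> 'rV[int]_d)
    (om : 'I_n -> R) (j : 'I_n) : cser R d :=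
  fun u => if `[< is_ray v om j >] then @mono R d (v j) u else 0.

(** Euler's integral, for x > 0 *)
Definition Gamma (R : realType) (x : R) : R :=
  fine (\int[@lebesgue_measure R]_(t in `]0%R, +oo[%classic)
          ((t `^ (x - 1)) * expR (- t))%:E)%E.

(** the entire function 1/Gamma on the real line, via
    1/Gamma(x) = x (x+1) ... (x+N-1) / Gamma(x+N) for any N with x+N > 0 *)
Definition rGamma (R : realType) (x : R) : R :=
  let N := (Num.truncn `|x|).+1 in
  (\prod_(i < N) (x + i%:R)) / Gamma (x + N%:R).

(** z = r e^{i theta} with r > 0 and chosen argument theta; z^s := exp(s log z)
    with log z = ln r + i theta.  Real and imaginary parts of the function
    s |-> z^s / Gamma(s+1) for real s. *)
Definition zsG_re (R : realType) (r theta s : R) : R :=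
  expR (s * ln r) * cos (s * theta) * rGamma (s + 1).
Definition zsG_im (R : realType) (r theta s : R) : R :=
  expR (s * ln r) * sin (s * theta) * rGamma (s + 1).

(** k-th Taylor coefficient at s = a of s |-> z^s / Gamma(s+1)
    (an entire function; for real a its complex Taylor coefficients are
    those computed along the real line). *)
Definition taylor_zG (R : realType) (r theta a : R) (k : nat) : R[i] :=
  Complex (derive1n k (zsG_re r theta) a / k`!%:R)
          (derive1n k (zsG_im r theta) a / k`!%:R).

(** the factor z_j^{a + D_j} / Gamma(a + D_j + 1) as an element of the
    completion *)
Definition zG_factor (R : realType) (d n : nat) (v : 'I_n -> 'rV[int]_d)
    (om : 'I_n -> R) (r theta a : R) (j : 'I_n) : cser R d :=
  pseries v om (taylor_zG r theta a) (Dj v om j).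

(** v \in Box(Sigma), witnessed by q and the maximal cone S *)
Definition box_witness (R : realType) (d n : nat) (v : 'I_n -> 'rV[int]_d)
    (om : 'I_n -> R) (w : 'rV[int]_d) (q : 'I_n -> rat) (S : {set 'I_n}) : Prop :=
  is_max_cell v om S /\
  (forall j, 0 <= q j < 1) /\ (forall j, j \notin S -> q j = 0) /\
  toR R w = \sum_(j < n) ratr (q j) *: toR R (v j).

Definition in_L (d n : nat) (v : 'I_n -> 'rV[int]_d) (l : 'I_n -> int) : Prop :=
  \sum_(j < n) (v j) *~ l j = 0.

Definition in_Supp (n : nat) (gam : 'I_n -> rat) (l : 'I_n -> int) (j : 'I_n) : Prop :=
  ~ (exists m : nat, (l j)%:~R + gam j = m%:R).

Definition in_S_Sigma (R : realType) (d n : nat) (v : 'I_n -> 'rV[int]_d)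
    (om : 'I_n -> R) (gam : 'I_n -> rat) (l : 'I_n -> int) : Prop :=
  in_L v l /\ exists T, is_max_cell v om T /\ forall j, in_Supp gam l j -> j \in T.

(* Main.v *)
Require Import Defs.
From HB Require Import structures.
From mathcomp Require Import all_boot all_order all_algebra.
From mathcomp Require Import all_classical all_reals all_analysis.
From mathcomp Require Import complex.
From mathcomp Require Import zify.
Import Order.TTheory GRing.Theory Num.Theory.
Local Open Scope classical_set_scope.
Local Open Scope ring_scope.

Section S.
Variables (R : realType) (d n : nat) (v : 'I_n -> 'rV[int]_d) (om : 'I_n -> R).

Lemma cmul_supp (f g : cser R d) u : cmul v om f g u <> 0 ->
  exists p1 p2, p1 + p2 = u /\ common_cone v om p1 p2 /\ f p1 <> 0 /\ g p2 <> 0.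
Proof.
move=> H; apply: contra_notP H => H; rewrite /cmul fsbig1 // => -[p1 p2] /= [e [_ [_ c]]].
have [f0|f0] := eqVneq (f p1) 0; first by rewrite f0 mul0r.
have [g0|g0] := eqVneq (g p2) 0; first by rewrite g0 mulr0.
by exfalso; apply: H; exists p1, p2; split => //; split => //; split; apply/eqP.
Qed.

Lemma pseries_supp c (f : cser R d) u : Defs.pseries v om c f u <> 0 ->
  exists k, c k <> 0 /\ cpow v om f k u <> 0.
Proof.
move=> H; apply: contra_notP H => H; rewrite /Defs.pseries fsbig1 // => k _.
have [f0|f0] := eqVneq (c k) 0; first by rewrite f0 mul0r.
have [g0|g0] := eqVneq (cpow v om f k u) 0; first by rewrite g0 mulr0.
by exfalso; apply: H; exists k; split; apply/eqP.
Qed.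

Lemma cpow_supp j k u : cpow v om (Dj v om j) k u <> 0 ->
  u = v j *+ k /\ (0 < k)%N -> is_ray v om j.
Abort.

Lemma cpow_supp j k u : cpow v om (Dj v om j) k u <> 0 ->
  u = v j *+ k /\ ((0 < k)%N -> is_ray v om j).
Proof.
elim: k u => [|k IH] u /=.
  rewrite /cpow /= /cone1 /mono; case: eqP => // -> _; split => //.
move=> /cmul_supp [p1 [p2 [<- [_ [h1 h2]]]]].
have [e2 _] := IH _ h2.
move: h1; rewrite /Dj; case: asboolP => // ray; rewrite /mono; case: eqP => // -> _.
by split => //; rewrite e2 mulrS.
Qed.

Lemma pairing_sum (u : 'rV[R]_d) (c : 'I_n -> R) (x : 'I_n -> 'rV[R]_d) :
  pairing u (\sum_(j < n) c j *: x j) = \sum_(j < n) c j * pairing u (x j).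
Proof.
rewrite /pairing.
under eq_bigr do rewrite summxE mulr_sumr.
rewrite exchange_big /=; apply: eq_bigr => j _.
rewrite mulr_sumr; apply: eq_bigr => i _; by rewrite mxE mulrCA.
Qed.

Lemma cellL (C C1 : {set 'I_n}) (lam mu : 'I_n -> R) :
  is_cell v om C -> is_cell v om C1 ->
  (forall j, 0 <= lam j) -> (forall j, 0 <= mu j) ->
  (forall j, j \notin C -> lam j = 0) -> (forall j, 0 < mu j -> j \in C1) ->
  \sum_(j < n) lam j *: toR R (v j) = \sum_(j < n) mu j *: toR R (v j) ->
  forall j, 0 < mu j -> j \in C.
Proof.
move=> [u Hu] [u1 Hu1] lam0 mu0 lamC muC1 E.
set a := fun j => pairing u (toR R (v j)).
set b := fun j => pairing u1 (toR R (v j)).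
have Ea : \sum_(j < n) mu j * a j = \sum_(j < n) lam j * om j.
  rewrite -pairing_sum -E pairing_sum; apply: eq_bigr => j _.
  case: (boolP (j \in C)) => jC; first by rewrite /a; congr (_ * _); apply/(Hu j).2.
  by rewrite lamC // !mul0r.
have Eb : \sum_(j < n) lam j * b j = \sum_(j < n) mu j * om j.
  rewrite -pairing_sum E pairing_sum; apply: eq_bigr => j _.
  have [mj|mj] := ltrP 0 (mu j).
    by rewrite /b; congr (_ * _); apply/(Hu1 j).2; apply: muC1.
  have -> : mu j = 0 by apply/eqP; rewrite eq_le mj mu0.
  by rewrite !mul0r.
have Lb : \sum_(j < n) lam j * b j <= \sum_(j < n) lam j * om j.
  by apply: ler_sum => j _; apply: ler_wpM2l => //; apply: (Hu1 j).1.
have S0 : \sum_(j < n) mu j * (om j - a j) = 0.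
  apply/eqP; rewrite eq_le; apply/andP; split.
    rewrite (eq_bigr (fun j => mu j * om j - mu j * a j)); last by move=> j _; rewrite mulrBr.
    by rewrite sumrB Ea -Eb subr_le0.
  apply: sumr_ge0 => j _; apply: mulr_ge0 => //; rewrite subr_ge0; apply: (Hu j).1.
move=> j mj.
have P0 : forall i, true -> 0 <= mu i * (om i - a i).
  by move=> i _; apply: mulr_ge0 => //; rewrite subr_ge0; apply: (Hu i).1.
have := psumr_eq0P P0 S0 (i:=j) isT.
move/eqP; rewrite mulf_eq0 (gt_eqF mj) /= subr_eq0 => /eqP e.
by apply/(Hu j).2; rewrite /a in e; rewrite -e.
Qed.
Lemma toRD (a b : 'rV[int]_d) : toR R (a + b) = toR R a + toR R b.
Proof. by apply/matrixP => i j; rewrite !mxE intrD. Qed.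
Lemma toR0 : toR R (0 : 'rV[int]_d) = 0.
Proof. by apply/matrixP => i j; rewrite !mxE. Qed.
Lemma toRMn (a : 'rV[int]_d) m : toR R (a *+ m) = m%:R *: toR R a.
Proof. by apply/matrixP => i j; rewrite !mxE mulmxnE rmorphMn mulr_natl. Qed.

Lemma big_inv (F : 'I_n -> cser R d) (Jp : 'I_n -> Prop) (S0 : {set 'I_n}) :
  is_cell v om S0 ->
  (forall j u, F j u <> 0 -> exists m : nat, u = v j *+ m /\
     ((0 < m)%N -> is_ray v om j) /\ (Jp j -> (0 < m)%N)) ->
  forall (r : seq 'I_n) u, (\big[cmul v om / @cone1 R d]_(j <- r) F j) u <> 0 ->
  exists mu : 'I_n -> R, (forall j, 0 <= mu j) /\
    toR R u = \sum_(j < n) mu j *: toR R (v j) /\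
    (exists C1, is_cell v om C1 /\ forall j, 0 < mu j -> j \in C1) /\
    (forall j, j \in r -> Jp j -> 0 < mu j).
Proof.
move=> cS0 HF; elim => [|k r IH] u.
  rewrite big_nil /cone1 /mono; case: eqP => // -> _.
  exists (fun _ => 0); split => //; split.
    by rewrite toR0 big1 // => j _; rewrite scale0r.
  by split => //; exists S0; split => // j; rewrite ltxx.
rewrite big_cons => /cmul_supp [p1 [p2 [<- [[C [cC [[lam1 [l10 [l1C E1]]] [lam2 [l20 [l2C E2]]]]]] [h1 h2]]]]].
have [mu' [mu0 [E' [[C1 [cC1 HC1]] HJ]]]] := IH _ h2.
have [m [e1 [mray mJ]]] := HF _ _ h1.
set d1 := fun j : 'I_n => (j == k)%:R * (m%:R : R).
have d10 : forall j, 0 <= d1 j by move=> j; rewrite /d1; apply: mulr_ge0.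
have Ed1 : \sum_(j < n) d1 j *: toR R (v j) = m%:R *: toR R (v k).
  rewrite (bigD1 k) //= big1 => [|j /negbTE jk]; last by rewrite /d1 jk mul0r scale0r.
  by rewrite /d1 eqxx mul1r addr0.
exists (fun j => mu' j + d1 j); split; first by move=> j; apply: addr_ge0.
split.
  under eq_bigr do rewrite scalerDl.
  by rewrite big_split /= Ed1 toRD e1 toRMn -E' addrC.
split.
  exists C; split => // j.
  have [mj|mj] := ltrP 0 (mu' j).
    move=> _; apply: (cellL _ _ _ _ cC cC1 l20 mu0 l2C HC1 _ j mj).
    by rewrite -E2 E'.
  have -> : mu' j = 0 by apply/eqP; rewrite eq_le mj mu0.
  rewrite add0r /d1; case: eqP => [->|]; last by rewrite mul0r ltxx.
  rewrite mul1r ltr0n => m0.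
  have := cellL _ _ _ _ cC (mray m0) l10 d10 l1C _ _ k.
  apply.
  - by move=> i; rewrite /d1 inE; case: eqP => // _; rewrite mul0r ltxx.
  - by rewrite -E1 Ed1 e1 toRMn.
  - by rewrite /d1 eqxx mul1r ltr0n.
move=> j; rewrite in_cons => /orP [/eqP ->|jr] Jj.
  by rewrite /d1 eqxx mul1r; apply: ltr_wpDl => //; rewrite ltr0n; apply: mJ.
by apply: ltr_wpDr => //; apply: HJ.
Qed.
Lemma exists_max (C : {set 'I_n}) : is_cell v om C ->
  exists T, is_max_cell v om T /\ C \subset T.
Proof.
suff H : forall k (C : {set 'I_n}), (#|'I_n| - #|C| <= k)%N -> is_cell v om C ->
  exists T, is_max_cell v om T /\ C \subset T by apply: H.
elim => [|k IH] {}C hk cC;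
  (have [mx|nmx] := pselect (forall T, is_cell v om T -> C \subset T -> T = C);
    first by exists C; split => //; split);
  move: nmx => /existsNP [T /not_implyP [cT /not_implyP [sCT nTC]]];
  have pr : C \proper T by rewrite finset.properEneq sCT andbT; apply/eqP => e; apply: nTC.
  have a := proper_card pr; have b := max_card T; exfalso; move: hk a b; rewrite ?card_ord; lia.
have : (#|'I_n| - #|T| <= k)%N.
  have a := proper_card pr; have b := max_card T; move: hk a b; rewrite ?card_ord; lia.
move=> /(IH T)/(_ cT) [T' [mT' sTT']].
exists T'; split => //; exact: (fintype.subset_trans sCT sTT').
Qed.
End S.
Lemma rGamma0 (R : realType) (K : nat) : rGamma (- (K%:R : R)) = 0.
Proof.
rewrite /rGamma normrN normr_nat natrK.
by rewrite (bigD1 (Ordinal (ltnSn K))) //= addNr mul0r mul0r.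
Qed.

Lemma taylor0 (R : realType) (r th : R) (t : int) : (t < 0) ->
  taylor_zG r th (t%:~R) 0 = 0.
Proof.
move=> tn.
have e : (t%:~R : R) + 1 = - ((absz (t + 1))%:R).
  have h : t + 1 <= 0 by lia.
  by rewrite natr_absz ler0_norm // mulrNz opprK intrD.
rewrite /taylor_zG /= /zsG_re /zsG_im e rGamma0 !mulr0 !mul0r.
by [].
Qed.
Arguments cmul_supp {R d n v om f g u}.
Arguments pseries_supp {R d n v om c f u}.
Arguments cpow_supp {R d n v om j k u}.
Arguments cellL {R d n v om C C1 lam mu}.
Arguments big_inv {R d n v om F Jp S0}.
Arguments exists_max {R d n v om C}.

Theorem proposition2p5 (R : realType) (d n : nat)
  (v : 'I_n -> 'rV[int]_d) (h : 'rV[int]_d -> int) (om : 'I_n -> R)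
  (beta : 'rV[int]_d) (r theta : 'I_n -> R)
  (w : 'rV[int]_d) (q : 'I_n -> rat) (S : {set 'I_n})
  (gam : 'I_n -> rat) (l : 'I_n -> int) :
  injective v ->
  (forall x y, h (x + y) = h x + h y) ->
  (forall j, h (v j) = 1) ->
  (forall x : 'rV[int]_d, exists c : 'I_n -> int, x = \sum_(j < n) v j *~ c j) ->
  is_regular_triangulation v om ->
  (forall j, 0 < r j) ->
  box_witness v om w q S ->
  toR R beta = \sum_(j < n) ratr (gam j) *: toR R (v j) ->
  (forall j, exists z : int, gam j - q j = z%:~R) ->
  in_L v l ->
  ~ in_S_Sigma v om gam l ->
  cmul v om (@mono R d w)
    (\big[cmul v om / @cone1 R d]_(j < n)
        zG_factor v om (r j) (theta j) ((l j)%:~R + ratr (gam j)) j)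
  = (fun _ => 0).
Proof.
move=> _ _ _ _ _ _ [[cS maxS] [q01 [qS Ew]]] Ebeta Hgam inL nS.
pose Jp := fun j => exists t : int, t < 0 /\ (l j)%:~R + gam j = t%:~R.
have HF : forall j u, zG_factor v om (r j) (theta j) ((l j)%:~R + ratr (gam j)) j u <> 0 ->
   exists m : nat, u = v j *+ m /\
     ((0 < m)%N -> is_ray v om j) /\ (Jp j -> (0 < m)%N).
  move=> j u; rewrite /zG_factor => /pseries_supp [k [ck /cpow_supp [e ray]]].
  exists k; split => //; split => //.
  move=> [t [tn et]]; rewrite lt0n; apply/eqP => k0; apply: ck; rewrite k0.
  have -> : (l j)%:~R + ratr (gam j) = (t%:~R : R).
    by rewrite -[RHS]ratr_int -et rmorphD /= ratr_int.
  exact: taylor0.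
apply: funext => u; apply: contrapT => H; apply: nS.
move: H => /cmul_supp [p1 [p2 [_ [[C [cC [[lam1 [l10 [l1C E1]]] [lam2 [l20 [l2C E2]]]]]] [h1 h2]]]]].
move: h1; rewrite /mono; case: eqP => // e1 _; subst p1.
have [mu [mu0 [E' [[C1 [cC1 HC1]] HJ]]]] := big_inv cS HF (index_enum _) _ h2.
have JC : forall j, Jp j -> j \in C.
  move=> j hj; apply: (cellL cC cC1 l20 mu0 l2C HC1 _ j (HJ j (mem_index_enum j) hj)).
  by rewrite -E2 E'.
have SC : forall j, 0 < q j -> j \in C.
  move=> j qj; apply: (cellL cC cS l10 (mu := fun j => ratr (q j)) _ l1C _ _ j).
  - by move=> i; rewrite ler0q; case/andP: (q01 i).
  - move=> i; rewrite ltr0q => qi; apply: contraT => iS.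
    by rewrite qS // ltxx in qi.
  - by rewrite -E1 Ew.
  - by rewrite ltr0q.
have [T [mT sCT]] := exists_max cC.
split => //; exists T; split => // j hj; apply: (fintype.subsetP sCT).
have [q0 _] := andP (q01 j).
move: q0; rewrite le_eqVlt => /orP [/eqP qz|qp]; last exact: SC.
apply: JC; have [z ez] := Hgam j; rewrite -qz subr0 in ez.
case: (ltP (l j + z) 0) => [neg|pos].
  by exists (l j + z); split => //; rewrite ez intrD.
exfalso; apply: hj; exists (absz (l j + z)).
by rewrite ez -intrD natr_absz ger0_norm.
Qed.
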